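(* For every $k\ge1$, $\langle B_k\rangle=\langle C_k\rangle$. (Moreover $|B_k|=|C_k|=2^k-k-1$ and the sets of $B_k$, viewed as characteristic vectors in $\mathbb{Z}_2^{2^k}$, are linearly independent, so $C_k$ is also a basis of this subspace.)
   Context: For subsets $x,y$ of $[n]=\{1,\dots,n\}$, $x\oplus y$ is the symmetric difference. For a family $X$ of subsets of $[n]$, its span $\langle X\rangle$ is the set of all symmetric differences $x_1\oplus\cdots\oplus x_t$ of finitely many members of $X$ (including the empty set for $t=0$). For a set $x$ of integers and integer $t\ge1$, $t\cdot x:=\{ti:i\in x\}$, applied elementwise to families. Define $B_1:=\emptyset$ and for $k\ge2$, $B_k:=B_{k-1}\cup\{\{i,2^{k-1}+i\}: 1\le i\le 2^{k-1}-1\}$. Define $O_1:=C_1:=\emptyset$ and for $k\ge2$: $O_k:=\{\{2i-1,2i+1\}:1\le i\le 2^{k-1}-1\}$ and $C_k:=O_k\cup 2\cdot C_{k-1}$. *)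

(* Defs.v *)
From HB Require Import structures.
From mathcomp Require Import all_boot all_order all_algebra all_field.
From mathcomp Require Import finmap.

Set Implicit Arguments.
Unset Strict Implicit.
Unset Printing Implicit Defensive.

Import GRing.Theory.
Local Open Scope fset_scope.

(* Subsets of [n] are finite sets of positive naturals. *)
Definition fsym (x y : {fset nat}) : {fset nat} := (x `\` y) `|` (y `\` x).

Definition symspan (X : {fset {fset nat}}) (x : {fset nat}) : Prop :=
  exists s : seq {fset nat}, {subset s <= X} /\ x = foldr fsym fset0 s.

Definition smul (t : nat) (x : {fset nat}) : {fset nat} := [fset t * i | i in x].
Definition fsmul (t : nat) (X : {fset {fset nat}}) : {fset {fset nat}} :=
  [fset smul t x | x in X].

(* B_1 = empty; B_{k} = B_{k-1} u {{i, 2^{k-1}+i} : 1 <= i <= 2^{k-1}-1}.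
   (B 0 is an arbitrary convention, equal to the empty family.) *)
Fixpoint B (k : nat) : {fset {fset nat}} :=
  match k with
  | 0 | 1 => fset0
  | k'.+1 => B k' `|` [fset [fset i; (2 ^ k' + i)%N] | i : nat in iota 1 (2 ^ k' - 1)]
  end.

Definition O (k : nat) : {fset {fset nat}} :=
  [fset [fset ((2 * i).-1)%N; ((2 * i).+1)%N] | i : nat in iota 1 (2 ^ k.-1 - 1)].

Fixpoint C (k : nat) : {fset {fset nat}} :=
  match k with
  | 0 | 1 => fset0
  | k'.+1 => O k `|` fsmul 2 (C k')
  end.

(* Characteristic vector in Z_2^{2^k}; coordinate j : 'I_(2^k) stands for element j+1 of [2^k]. *)
Definition chi (k : nat) (x : {fset nat}) : 'rV['F_2]_(2 ^ k) :=
  \row_(j < 2 ^ k) (if j.+1 \in x then 1%R else 0%R).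

(* Main.v *)
Require Import Defs.
From HB Require Import structures.
From mathcomp Require Import all_boot all_order all_algebra all_field.
From mathcomp Require Import finmap zify.
Local Open Scope fset_scope.
Local Notation fsym := Defs.fsym.

Lemma in_fsym (x y : {fset nat}) z : (z \in fsym x y) = addb (z \in x) (z \in y).
Proof. rewrite /fsym in_fsetU !in_fsetD; by case: (z \in x); case: (z \in y). Qed.

Definition cls j (x : {fset nat}) : {fset nat} := [fset m in x | logn 2 m == j].
Lemma in_cls j x m : (m \in cls j x) = (m \in x) && (logn 2 m == j).
Proof. by rewrite /cls !inE. Qed.

Lemma cls_fsym j x y : cls j (fsym x y) = fsym (cls j x) (cls j y).
Proof. apply/fsetP => z; rewrite !(in_cls, in_fsym); by case: (z \in x); case: (z \in y); case: (logn 2 z == j). Qed.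

Lemma odd_fsym (a b : {fset nat}) : odd #|` fsym a b| = addb (odd #|` a|) (odd #|` b|).
Proof.
rewrite /Defs.fsym cardfsU.
have -> : (a `\` b) `&` (b `\` a) = fset0.
  apply/fsetP => z; rewrite in_fsetI !in_fsetD in_fset0; by case: (z \in a); case: (z \in b).
rewrite cardfs0 subn0 !cardfsD [b `&` a]fsetIC.
have h1 := fsubset_leq_card (fsubsetIl a b).
have h2 := fsubset_leq_card (fsubsetIr a b).
rewrite oddD !oddB //; by case: (odd #|` a|); case: (odd #|` b|); case: (odd _).
Qed.

Definition S k (x : {fset nat}) :=
  (forall m, m \in x -> 0 < m < 2 ^ k) /\ (forall j, ~~ odd #|` cls j x|).

Lemma S0 k : S k fset0.
Proof.
split => [m|j]; first by rewrite in_fset0.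
have -> : cls j fset0 = fset0 by apply/fsetP => z; rewrite in_cls in_fset0.
by rewrite cardfs0.
Qed.

Lemma S_fsym k x y : S k x -> S k y -> S k (fsym x y).
Proof.
move=> [bx px] [by_ py]; split => [m|j].
  rewrite in_fsym; case mx: (m \in x); first by move=> _; apply: bx.
  by move/by_.
by rewrite cls_fsym odd_fsym (negbTE (px j)) (negbTE (py j)).
Qed.

Lemma span_S k X x : (forall y, y \in X -> S k y) -> symspan X x -> S k x.
Proof.
move=> XS [s [sX ->]]; elim: s sX => [|y s IH] sX /=; first exact: S0.
apply: S_fsym; first by apply: XS; apply: sX; rewrite inE eqxx.
by apply: IH => z zs; apply: sX; rewrite inE zs orbT.
Qed.

Lemma logn2_double m : 0 < m -> logn 2 (2 * m) = (logn 2 m).+1.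
Proof. move=> m0; rewrite lognM // logn_prime //. Qed.

Lemma logn2_odd m : odd m -> logn 2 m = 0.
Proof. by move=> om; rewrite logn_coprime // coprime2n. Qed.

Lemma logn2_sum j i : 0 < i < 2 ^ j -> logn 2 (2 ^ j + i) = logn 2 i.
Proof.
elim: j i => [|j IH] i hi; first by lia.
have [oi|ei] := boolP (odd i).
  rewrite (@logn2_odd i oi) logn2_odd //.
  by rewrite oddD oi expnS oddM.
have hie : i = 2 * i./2 by rewrite -[i in LHS]odd_double_half (negbTE ei) add0n -muln2 mulnC.
have hi2 : 0 < i./2 < 2 ^ j by move: hi; rewrite expnS; lia.
have -> : (2 ^ j.+1 + i = 2 * (2 ^ j + i./2))%N by rewrite expnS; lia.
rewrite [in RHS]hie !logn2_double ?IH //; lia.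
Qed.

Lemma logn2_pow m j : 0 < m <= 2 ^ j -> logn 2 m = j -> m = 2 ^ j.
Proof.
elim: j m => [|j IH] m hm hl; first by lia.
have [om|em] := boolP (odd m); first by rewrite logn2_odd in hl.
have hie : m = 2 * m./2 by rewrite -[m in LHS]odd_double_half (negbTE em) add0n -muln2 mulnC.
have hm' : 0 < m./2 <= 2 ^ j by move: hm; rewrite expnS; lia.
move: hl; rewrite hie logn2_double; last by lia.
by case=> /IH -> //; rewrite expnS.
Qed.
Local Notation B := Defs.B.
Lemma fsymK x y : fsym (fsym x y) y = x.
Proof. apply/fsetP => z; rewrite !in_fsym; by case: (z \in x); case: (z \in y). Qed.
Lemma fsymC x y : fsym x y = fsym y x.
Proof. apply/fsetP => z; rewrite !in_fsym; by case: (z \in x); case: (z \in y). Qed.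

Lemma span0 X : symspan X fset0.
Proof. by exists [::]. Qed.
Lemma span_add X a y : symspan X a -> y \in X -> symspan X (fsym a y).
Proof.
case=> s [sX ->] yX; exists (y :: s); split; last by rewrite /= fsymC.
by move=> z; rewrite inE => /orP [/eqP -> //|]; apply: sX.
Qed.

Definition newB k := [fset [fset i; (2 ^ k + i)%N] | i : nat in iota 1 (2 ^ k - 1)].
Lemma B_succ k : B k.+1 = B k `|` newB k.
Proof.
case: k => [|k] //=; apply/fsetP => x; rewrite in_fsetU in_fset0 /=.
by apply/esym/imfsetP => -[i].
Qed.

Lemma memB k (x : {fset nat}) : x \in B k <-> exists j i, (1 <= j < k) /\ (1 <= i < 2 ^ j) /\ x = [fset i; (2 ^ j + i)%N].
Proof.
elim: k x => [|k IH] x; first by split => //; move=> [j [i [hj _]]]; lia.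
have hk : 0 < 2 ^ k by rewrite expn_gt0.
rewrite B_succ in_fsetU; split.
  case/orP => [xB|/imfsetP [i]]; first by have [j [i [hj [hi ->]]]] := iffLR (IH x) xB; exists j, i; split => //; lia.
  rewrite /= mem_iota => hi ->; exists k, i; split; last by split => //; lia.
  case: k hk hi {IH} => [|k] _ hi; lia.
move=> [j [i [hj [hi ->]]]].
have [jk|jk] : j < k \/ j = k by lia.
  by apply/orP; left; apply: (iffRL (IH _)); exists j, i; split; [lia | split].

apply/orP; right; apply/imfsetP; exists i => //; subst j.
have hh : i \in iota 1 (2 ^ k - 1) by rewrite mem_iota; lia.
exact: hh. reflexivity.
Qed.

Lemma pairS k a b : a != b -> logn 2 a = logn 2 b -> 0 < a < 2 ^ k -> 0 < b < 2 ^ k -> S k [fset a; b].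
Proof.
move=> ab ll ha hb; split => [m|j]; first by rewrite in_fset2 => /orP [] /eqP ->.
case: (boolP (logn 2 a == j)) => hj.
  have -> : cls j [fset a; b] = [fset a; b].
    apply/fsetP => z; rewrite in_cls in_fset2.
    have [->|za] := eqVneq z a; first by rewrite ?eqxx /= hj.
    have [->|zb] := eqVneq z b; first by rewrite ?eqxx ?orbT -ll hj.
    by [].
  by rewrite cardfs2 ab.
have -> : cls j [fset a; b] = fset0.
  apply/fsetP => z; rewrite in_cls in_fset2 in_fset0.
  have [->|za] := eqVneq z a; first by rewrite ?eqxx /= (negbTE hj).
  have [->|zb] := eqVneq z b; first by rewrite ?eqxx ?orbT -ll (negbTE hj).
  by [].
by rewrite cardfs0.
Qed.

Lemma B_S k y : y \in B k -> S k y.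
Proof.
move/memB => [j [i [hj [hi ->]]]].
have h2 : 2 ^ j.+1 <= 2 ^ k by rewrite leq_exp2l //; lia.
have h1 : 0 < 2 ^ j by rewrite expn_gt0.
move: h2; rewrite expnS => h2.
apply: pairS; first (apply/eqP; lia); first by rewrite logn2_sum //; lia.
  lia.
lia.
Qed.

Lemma S_spanB k n x : S k x -> (forall m, m \in x -> m < n) -> symspan (B k) x.
Proof.
elim: n x => [|n IH] x hS hb.
  have -> : x = fset0 by apply/fsetP => z; rewrite in_fset0; apply/negbTE/negP => /hb.
  exact: span0.
case: (boolP (n \in x)) => nx; last first.
  apply: IH => // m mx; have := hb m mx; rewrite ltnS leq_eqVlt => /orP [/eqP e|//].
  by move: nx; rewrite -e mx.
have [hxb hxp] := hS.
have /andP [n0 nk] := hxb n nx.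
set j := trunc_log 2 n.
have hj1 := trunc_logP (isT : 1 < 2) n0; have hj2 := trunc_log_ltn n (isT : 1 < 2).
rewrite -/j in hj1 hj2; move: hj2; rewrite expnS => hj2.
case: (boolP (n == 2 ^ j)) => [/eqP en|nen].
  have : cls j x = [fset n].
    apply/fsetP => z; rewrite in_cls in_fset1; apply/idP/idP.
      case/andP => zx /eqP zj; have /andP [z0 _] := hxb z zx.
      have := hb z zx; rewrite ltnS => zn.
      by rewrite en; apply/eqP; apply: logn2_pow => //; rewrite z0 -en.
    by move/eqP ->; rewrite nx /= en pfactorK.
  by move=> e; have := hxp j; rewrite e cardfs1.
set i := (n - 2 ^ j)%N.
have hi : 1 <= i < 2 ^ j by move/eqP: nen; lia.
have j1 : 1 <= j by case: (j) hi => [|//]; lia.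
have jk : j < k by rewrite -(ltn_exp2l _ _ (isT : 1 < 2)); lia.
have en : n = (2 ^ j + i)%N by lia.
have pB : [fset i; (2 ^ j + i)%N] \in B k by apply: (iffRL (memB _ _)); exists j, i; split; [lia|split].
rewrite -(fsymK x [fset i; (2 ^ j + i)%N]); apply: span_add => //.
apply: IH; first by apply: S_fsym => //; apply: B_S.
move=> m; rewrite in_fsym in_fset2 -en.
case: (boolP (m == n)) => [/eqP ->|mn]; first by rewrite nx orbT.
case: (boolP (m == i)) => [/eqP ->|mi] /=; first by move=> _; lia.
rewrite addbF => /hb; rewrite ltnS leq_eqVlt (negbTE mn) //.
Qed.
Local Notation C := Defs.C.
Local Notation O := Defs.O.

Lemma in_smul2 (a : {fset nat}) z : (z \in smul 2 a) = ~~ odd z && (z./2 \in a).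
Proof.
apply/imfsetP/andP => [[i ia ->]|[ez za]].
  by rewrite mul2n odd_double doubleK.
exists z./2; first exact: za.
by rewrite -[z in LHS]odd_double_half (negbTE ez) add0n mul2n.
Qed.

Lemma smul2_fsym x y : smul 2 (fsym x y) = fsym (smul 2 x) (smul 2 y).
Proof. apply/fsetP => z; rewrite !(in_smul2, in_fsym); by case: (odd z). Qed.
Lemma smul2_0 : smul 2 fset0 = fset0.
Proof. apply/fsetP => z; by rewrite in_smul2 in_fset0 andbF. Qed.
Lemma smul2_inj : injective (smul 2).
Proof.
move=> x y e; apply/fsetP => z; have := in_smul2 x (2 * z); rewrite e in_smul2.
by rewrite mul2n odd_double doubleK /=.
Qed.

Lemma span_mono X Y x : {subset X <= Y} -> symspan X x -> symspan Y x.
Proof. by move=> XY [s [sX ->]]; exists s; split => // z /sX /XY. Qed.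

Lemma span_smul2 X y : symspan X y -> symspan (fsmul 2 X) (smul 2 y).
Proof.
move=> [s [sX ->]]; exists (map (smul 2) s); split.
  move=> z /mapP [w ws ->]; apply/imfsetP; exists w => //; exact: sX.
elim: s {sX} => [|w s IH] /=; first exact: smul2_0.
by rewrite smul2_fsym IH.
Qed.

Lemma C_succ k : C k.+1 = O k.+1 `|` fsmul 2 (C k).
Proof.
case: k => [|k] //=; apply/fsetP => x; rewrite in_fsetU in_fset0 /=.
apply/esym/orP => -[/imfsetP [i] //|/imfsetP [i]] //.
Qed.

Lemma memO k (x : {fset nat}) : x \in O k.+1 <-> exists i, (1 <= i < 2 ^ k) /\ x = [fset (2 * i).-1; (2 * i).+1].
Proof.
have hk : 0 < 2 ^ k by rewrite expn_gt0.
split.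
  move/imfsetP => [i]; rewrite /= mem_iota => hi ->; exists i; split => //; lia.
move=> [i [hi ->]]; apply/imfsetP; exists i => //.
have hh : i \in iota 1 (2 ^ k.+1.-1 - 1) by rewrite mem_iota /=; lia.
exact: hh.
Qed.

Lemma cls_smul2 j y : (forall m, m \in y -> 0 < m) -> cls j.+1 (smul 2 y) = smul 2 (cls j y).
Proof.
move=> hy; apply/fsetP => z; rewrite !(in_cls, in_smul2).
case: (boolP (odd z)) => //= ez; case: (boolP (z./2 \in y)) => //= zy.
have e : z = 2 * z./2 by rewrite -[z in LHS]odd_double_half (negbTE ez) add0n mul2n.
by rewrite [in LHS]e logn2_double ?hy.
Qed.

Lemma card_smul2 y : #|` smul 2 y| = #|` y|.
Proof.
rewrite /smul card_imfset //=; last by move=> a b; lia.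
Qed.

Lemma smul2_S k y : S k y -> S k.+1 (smul 2 y).
Proof.
move=> [hb hp]; have hy : forall m, m \in y -> 0 < m by move=> m /hb /andP [].
split => [m|[|j]].
  rewrite in_smul2 => /andP [em /hb hm].
  have e : m = 2 * m./2 by rewrite -[m in LHS]odd_double_half (negbTE em) add0n mul2n.
  rewrite e expnS; lia.
  have -> : cls 0 (smul 2 y) = fset0.
    apply/fsetP => z; rewrite in_cls in_smul2 in_fset0.
    case: (boolP (odd z)) => //= ez; case: (boolP (z./2 \in y)) => //= zy.
    have e : z = 2 * z./2 by rewrite -[z in LHS]odd_double_half (negbTE ez) add0n mul2n.
    by rewrite e logn2_double ?hy.
  by rewrite cardfs0.
by rewrite cls_smul2 // card_smul2.
Qed.

Lemma smul2_S_inv k y : S k.+1 (smul 2 y) -> S k y.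
Proof.
move=> [hb hp].
have hb' : forall m, m \in y -> 0 < m < 2 ^ k.
  move=> m my; have : 2 * m \in smul 2 y by rewrite in_smul2 mul2n odd_double doubleK.
  move/hb; rewrite expnS; lia.
split => // j; have := hp j.+1; rewrite cls_smul2 ?card_smul2 //.
by move=> m /hb' /andP [].
Qed.

Lemma C_S k y : y \in C k -> S k y.
Proof.
elim: k y => [|k IH] y; first by rewrite in_fset0.
rewrite C_succ in_fsetU => /orP [/memO [i [hi ->]]|/imfsetP [w /= wC ->]]; last first.
  by apply: smul2_S; apply: IH.
have h1 : 0 < 2 ^ k by rewrite expn_gt0.
have o1 : odd (2 * i).+1 by rewrite /= mul2n odd_double.
have o2 : odd (2 * i).-1.
  have -> : (2 * i).-1 = (2 * i.-1).+1 by lia.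
  by rewrite /= mul2n odd_double.
apply: pairS; first (apply/eqP; lia).
- by rewrite !logn2_odd.
- rewrite expnS; lia.
- rewrite expnS; lia.
Qed.

Lemma even_smul2 (x : {fset nat}) : (forall m, m \in x -> ~~ odd m) -> x = smul 2 [fset m./2 | m in x].
Proof.
move=> he; apply/fsetP => z; rewrite in_smul2; apply/idP/idP.
  move=> zx; rewrite he //=; apply/imfsetP; exists z => //.
case/andP => ez /imfsetP [w /= wx e].
have e1 : z = 2 * z./2 by rewrite -[z in LHS]odd_double_half (negbTE ez) add0n mul2n.
have e2 : w = 2 * w./2 by rewrite -[w in LHS]odd_double_half (negbTE (he w wx)) add0n mul2n.
by rewrite e1 e -e2.
Qed.

Lemma S_spanC k x : S k x -> symspan (C k) x.
Proof.
elim: k x => [|k IHk] x.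
  move=> [hb _]; have -> : x = fset0.
    by apply/fsetP => z; rewrite in_fset0; apply/negbTE/negP => /hb; lia.
  exact: span0.
suff : forall n x, S k.+1 x -> (forall m, m \in x -> odd m -> m < n) -> symspan (C k.+1) x.
  by move=> H hS; apply: (H (2 ^ k.+1)) => // m /(proj1 hS) /andP [_ mk] _.
elim=> [|n IH] {}x hS hb.
  have he : forall m, m \in x -> ~~ odd m by move=> m mx; apply/negP => /(hb m mx).
  rewrite (even_smul2 _ he); apply: (@span_mono (fsmul 2 (C k))).
    by move=> z zC; rewrite C_succ in_fsetU zC orbT.
  apply: span_smul2; apply: IHk; apply: smul2_S_inv; by rewrite -(even_smul2 _ he).
case: (boolP ((n \in x) && odd n)) => nx; last first.
  apply: IH => // m mx om; have := hb m mx om; rewrite ltnS leq_eqVlt => /orP [/eqP e|//].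
  by move: nx; rewrite -e mx om.
case/andP: nx => nx on.
have [hxb hxp] := hS.
have /andP [n0 nk] := hxb n nx.
case: (boolP (n == 1)) => [/eqP n1|n1].
  have : cls 0 x = [fset 1].
    apply/fsetP => z; rewrite in_cls in_fset1; apply/idP/idP.
      case/andP => zx /eqP zj; have /andP [z0 _] := hxb z zx.
      have oz : odd z.
        apply/negP => ez; move: zj.
        have e : z = 2 * z./2 by rewrite -[z in LHS]odd_double_half (negbTE (introN idP ez)) add0n mul2n.
        rewrite e logn2_double //; lia.
      have := hb z zx oz; rewrite n1 => zn; apply/eqP; lia.
    by move/eqP ->; rewrite -n1 nx /= n1 logn1.
  by move=> e; have := hxp 0; rewrite e cardfs1.
set i := n./2.
have en : n = (2 * i).+1 by rewrite /i -[n in LHS]odd_double_half on mul2n.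
have hi : 1 <= i < 2 ^ k by move: nk n1; rewrite expnS; lia.
have pC : [fset (2 * i).-1; (2 * i).+1] \in C k.+1.
  by rewrite C_succ in_fsetU; apply/orP; left; apply: (iffRL (memO _ _)); exists i.
rewrite -(fsymK x [fset (2 * i).-1; (2 * i).+1]); apply: span_add => //.
apply: IH; first by apply: S_fsym => //; apply: C_S.
move=> m; rewrite in_fsym in_fset2 -en.
case: (boolP (m == n)) => [/eqP ->|mn]; first by rewrite nx orbT.
case: (boolP (m == (2 * i).-1)) => [/eqP ->|mi] /=; first by move=> _ _; lia.
rewrite addbF => /hb h /h; rewrite ltnS leq_eqVlt (negbTE mn) //.
Qed.

Lemma card_B k : #|` B k| = (2 ^ k - k - 1)%N.
Proof.
elim: k => [|k IH]; first by [].
have hk : k < 2 ^ k by apply: ltn_expl.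
rewrite B_succ cardfsU IH.
have -> : B k `&` newB k = fset0.
  apply/fsetP => x; rewrite in_fsetI in_fset0; apply/negbTE/negP => /andP [/memB [j [i [hj [hi ex]]]] /imfsetP [i' /= hi' ex']].
  move: hi'; rewrite mem_iota => hi'.
  have h2 : 2 ^ j.+1 <= 2 ^ k by rewrite leq_exp2l //; lia.
  move: h2; rewrite expnS => h2.
  have : (2 ^ k + i')%N \in x by rewrite ex' in_fset2 eqxx orbT.
  rewrite ex in_fset2 => /orP [] /eqP; lia.
rewrite cardfs0 subn0 card_in_imfset /=.
  rewrite undup_id ?iota_uniq // size_iota expnS; lia.
move=> a b _ _ e.
have : a \in [fset b; (2 ^ k + b)%N] by rewrite -e in_fset2 eqxx.
have : b \in [fset a; (2 ^ k + a)%N] by rewrite e in_fset2 eqxx.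
have h0 : 0 < 2 ^ k by rewrite expn_gt0.
rewrite !in_fset2 => /orP [] /eqP h1 /orP [] /eqP h2; lia.
Qed.

Lemma card_C k : #|` C k| = (2 ^ k - k - 1)%N.
Proof.
elim: k => [|k IH]; first by [].
have hk : k < 2 ^ k by apply: ltn_expl.
rewrite C_succ cardfsU.
have -> : O k.+1 `&` fsmul 2 (C k) = fset0.
  apply/fsetP => x; rewrite in_fsetI in_fset0; apply/negbTE/negP => /andP [/memO [i [hi ex]] /imfsetP [w /= _ ex']].
  have : (2 * i).+1 \in x by rewrite ex in_fset2 eqxx orbT.
  by rewrite ex' in_smul2 /= mul2n odd_double.
have -> : #|` fsmul 2 (C k)| = #|` C k|.
  by rewrite /fsmul card_imfset //= => a b; apply: smul2_inj.
rewrite cardfs0 subn0.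
have -> : #|` O k.+1| = (2 ^ k - 1)%N.
  rewrite /O card_in_imfset /=.
    rewrite undup_id ?iota_uniq // size_iota //.
  move=> a b; rewrite !mem_iota => ha hb e.
  have : (2 * a).+1 \in [fset (2 * b).-1; (2 * b).+1] by rewrite -e in_fset2 eqxx orbT.
  have : (2 * b).+1 \in [fset (2 * a).-1; (2 * a).+1] by rewrite e in_fset2 eqxx orbT.
  rewrite !in_fset2 => /orP [] /eqP h1 /orP [] /eqP h2; lia.
rewrite IH expnS; lia.
Qed.
Import GRing.Theory.

Lemma notin_span k (t : seq {fset nat}) (x : {fset nat}) m : m \in x -> 0 < m <= 2 ^ k ->
  (forall y, y \in t -> m \notin y) -> (chi k x \notin <<map (chi k) t>>)%VS.
Proof.
move=> mx hm ht; apply/negP => hv.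
have hj : m.-1 < 2 ^ k by lia.
pose j0 : 'I_(2 ^ k) := Ordinal hj.
have := coord_span (X := in_tuple (map (chi k) t)) hv.
move/(congr1 (fun v : 'rV['F_2]_(2 ^ k) => v ord0 j0)).
rewrite summxE mxE /= prednK; last by lia.
rewrite mx big1 => [|i _]; first by move/eqP; rewrite oner_eq0.
rewrite mxE (nth_map fset0); last by rewrite -(size_map (chi k)).
rewrite mxE /= prednK; last by lia.
rewrite (negbTE (ht _ _)) ?mulr0 //; apply: mem_nth; by rewrite -(size_map (chi k)).
Qed.

Lemma free_gen k (s : seq {fset nat}) (M : {fset nat} -> nat) :
  (forall x, x \in s -> [/\ M x \in x, (forall z, z \in x -> z <= M x) & 0 < M x <= 2 ^ k]) ->
  uniq (map M s) -> free (map (chi k) s).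
Proof.
move=> hs hu.
pose r := fun x y : {fset nat} => M y <= M x.
have hp : perm_eq (sort r s) s by rewrite perm_sort.
rewrite -(perm_free (perm_map (chi k) hp)).
have hs' : forall x, x \in sort r s -> [/\ M x \in x, (forall z, z \in x -> z <= M x) & 0 < M x <= 2 ^ k].
  by move=> x; rewrite (perm_mem hp); apply: hs.
have hu' : uniq (map M (sort r s)) by rewrite (perm_uniq (perm_map M hp)).
have hsort : sorted r (sort r s) by apply: sort_sorted => x y; rewrite /r leq_total.
have rtr : transitive r by move=> a b c; rewrite /r; lia.
move: hs' hu' hsort; elim: (sort r s) => [|x t IH] hs' hu' hsort /=.
  exact: nil_free.
rewrite free_cons; apply/andP; split.
  have [mx hx hm] := hs' x (mem_head _ _).
  apply: (@notin_span k t x (M x)) => // y yt; apply/negP => my.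
  have yxt : y \in x :: t by rewrite inE yt orbT.
  have [_ hy _] := hs' y yxt.
  have := hy _ my.
  have := order_path_min rtr hsort; move/allP/(_ y yt); rewrite /r => h1 h2.
  have e : M x = M y by lia.
  move: hu'; rewrite /= e => /andP [/negP hn _]; apply: hn; exact: map_f.
apply: IH.
- by move=> y yt; apply: hs'; rewrite inE yt orbT.
- by case/andP: hu'.
- exact: path_sorted hsort.
Qed.

Definition Mx (x : {fset nat}) := \max_(z <- enum_fset x) z.
Lemma Mx_eq x m : m \in x -> (forall z, z \in x -> z <= m) -> Mx x = m.
Proof.
move=> mx hz; apply/eqP; rewrite eqn_leq; apply/andP; split.
  by apply/bigmax_leqP_seq => z zx _; apply: hz.
have mx' : m \in enum_fset x by [].
by have := @leq_bigmax_seq _ (enum_fset x) predT (fun z => z) m mx' isT.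
Qed.

Lemma free_B k : free [seq chi k x | x <- enum_fset (B k)].
Proof.
apply: (@free_gen k _ Mx).
  move=> x xB; have [j [i [hj [hi ex]]]] := iffLR (memB k x) xB.
  have hM : Mx x = (2 ^ j + i)%N.
    apply: Mx_eq; first by rewrite ex in_fset2 eqxx orbT.
    by move=> z; rewrite ex in_fset2 => /orP [] /eqP ->; lia.
  have h2 : 2 ^ j.+1 <= 2 ^ k by rewrite leq_exp2l //; lia.
  move: h2; rewrite expnS => h2.
  rewrite hM; split; first by rewrite ex in_fset2 eqxx orbT.
    by move=> z; rewrite ex in_fset2 => /orP [] /eqP ->; lia.
  lia.
rewrite map_inj_in_uniq ?fset_uniq // => x y xB yB.
have [j [i [hj [hi ex]]]] := iffLR (memB k x) xB.
have [j' [i' [hj' [hi' ey]]]] := iffLR (memB k y) yB.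
have hMx : Mx x = (2 ^ j + i)%N.
  apply: Mx_eq; first by rewrite ex in_fset2 eqxx orbT.
  by move=> z; rewrite ex in_fset2 => /orP [] /eqP ->; lia.
have hMy : Mx y = (2 ^ j' + i')%N.
  apply: Mx_eq; first by rewrite ey in_fset2 eqxx orbT.
  by move=> z; rewrite ey in_fset2 => /orP [] /eqP ->; lia.
rewrite hMx hMy ex ey => e.
have ejj : j = j'.
  case: (ltngtP j j') => // hjj.
    have : 2 ^ j.+1 <= 2 ^ j' by rewrite leq_exp2l.
    rewrite expnS; lia.
  have : 2 ^ j'.+1 <= 2 ^ j by rewrite leq_exp2l.
  rewrite expnS; lia.
subst j'; have -> : i = i' by lia.
by [].
Qed.

Theorem mainTheorem4 (k : nat) (hk : 1 <= k) :
  (forall x : {fset nat}, symspan (B k) x <-> symspan (C k) x)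
  /\ #|` B k| = 2 ^ k - k - 1
  /\ #|` C k| = 2 ^ k - k - 1
  /\ free [seq chi k x | x <- enum_fset (B k)].
Proof.
split.
  move=> x; split => h.
    by apply: S_spanC; apply: (@span_S k (B k)) => // y; apply: B_S.
  have hS : S k x by apply: (@span_S k (C k)) => // y; apply: C_S.
  by apply: (@S_spanB k (2 ^ k)) => // m /(proj1 hS) /andP [_ ->].
split; first exact: card_B.
split; first exact: card_C.
exact: free_B.
Qed.
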